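(* Let $A=D+N\in\mathcal{M}_n(\mathbb{H})$, where $D=\operatorname{diag}(d_1,\dots,d_n)$ with all $d_i\in\mathbb{R}$ and $N=[a_{ij}]$ is a strictly upper triangular (hence nilpotent) matrix whose graph $\mathcal{G}_N$ is a tree. Let $\underline{d}=\min_i d_i$, $\overline{d}=\max_i d_i$ and, for $d\in[\underline{d},\overline{d}]$, $$r(d)=\max\Big\{\sum_{i\ne j}\beta_i\beta_j|a_{ij}|:\ \sum_i d_i\beta_i^2=d,\ \beta\in\mathbb{S}^+_{\mathbb{R}^n}\Big\}.$$ Then $$W(A)=\bigcup_{d\in[\underline{d},\overline{d}]}\mathbb{D}_{\mathbb{H}}(d,r(d)).$$
   Context: $\mathbb{H}$ denotes the real quaternions, $|q|^2=qq^*$. The numerical range of $A\in\mathcal{M}_n(\mathbb{H})$ is $W(A)=\{\mathbf{x}^*A\mathbf{x}:\mathbf{x}\in\mathbb{H}^n,\ \mathbf{x}^*\mathbf{x}=1\}$. $\mathbb{D}_{\mathbb{H}}(c,r)=\{q\in\mathbb{H}:|q-c|\le r\}$. $\mathbb{S}^+_{\mathbb{R}^n}=\{\beta\in\mathbb{R}^n:\|\beta\|=1,\ \beta_i\ge0\ \forall i\}$. The graph $\mathcal{G}_N$ of $N=[a_{ij}]$ is the undirected graph on $\{1,\dots,n\}$ with an edge between $i$ and $j$ (a loop if $i=j$) whenever $a_{ij}\ne0$ or $a_{ji}\ne0$; $N$ is a tree if $\mathcal{G}_N$ is connected and has no cycles. *)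

(* Defs.v *)
(* Real quaternions over an arbitrary real closed field R
   (R = the reals is the intended instance). *)
From HB Require Import structures.
From mathcomp Require Import all_boot all_order all_algebra.
Set Implicit Arguments. Unset Strict Implicit. Unset Printing Implicit Defensive.
Import Order.TTheory GRing.Theory Num.Theory.
Local Open Scope ring_scope.

Section Quat.
Variable R : rcfType.

(* q = q0 + q1 i + q2 j + q3 k *)
Record quat := Quat { q0 : R; q1 : R; q2 : R; q3 : R }.

Definition quat_to (q : quat) : R * R * R * R := (q0 q, q1 q, q2 q, q3 q).
Definition quat_of (t : R * R * R * R) : quat :=
  let: (a, b, c, d) := t in Quat a b c d.
Lemma quat_toK : cancel quat_to quat_of. Proof. by case. Qed.
HB.instance Definition _ := Equality.copy quat (can_type quat_toK).

Definition qreal (r : R) : quat := Quat r 0 0 0.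
Definition qzero : quat := qreal 0.
Definition qadd (p q : quat) : quat :=
  Quat (q0 p + q0 q) (q1 p + q1 q) (q2 p + q2 q) (q3 p + q3 q).
Definition qopp (p : quat) : quat := Quat (- q0 p) (- q1 p) (- q2 p) (- q3 p).
Definition qsub (p q : quat) : quat := qadd p (qopp q).
Definition qmul (p q : quat) : quat :=
  Quat (q0 p * q0 q - q1 p * q1 q - q2 p * q2 q - q3 p * q3 q)
       (q0 p * q1 q + q1 p * q0 q + q2 p * q3 q - q3 p * q2 q)
       (q0 p * q2 q - q1 p * q3 q + q2 p * q0 q + q3 p * q1 q)
       (q0 p * q3 q + q1 p * q2 q - q2 p * q1 q + q3 p * q0 q).
Definition qconj (p : quat) : quat := Quat (q0 p) (- q1 p) (- q2 p) (- q3 p).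
(* |q|^2 = q q^*  (a real number; we record its real part) *)
Definition qnorm2 (p : quat) : R := q0 (qmul p (qconj p)).
Definition qnorm (p : quat) : R := Num.sqrt (qnorm2 p).

(* Matrices in M_n(H) are functions 'I_n -> 'I_n -> quat; vectors 'I_n -> quat *)
Definition qsum n (F : 'I_n -> quat) : quat := \big[qadd/qzero]_(i < n) F i.

Definition qform n (A : 'I_n -> 'I_n -> quat) (x : 'I_n -> quat) : quat :=
  qsum (fun i => qsum (fun j => qmul (qmul (qconj (x i)) (A i j)) (x j))).

Definition qunit_vec n (x : 'I_n -> quat) : Prop :=
  qsum (fun i => qmul (qconj (x i)) (x i)) = qreal 1.

Definition numrange n (A : 'I_n -> 'I_n -> quat) (q : quat) : Prop :=
  exists x : 'I_n -> quat, qunit_vec x /\ q = qform A x.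

Definition qdisk (c : quat) (r : R) (q : quat) : Prop := qnorm (qsub q c) <= r.

Definition diag_plus n (d : 'I_n -> R) (N : 'I_n -> 'I_n -> quat) : 'I_n -> 'I_n -> quat :=
  fun i j => qadd (if i == j then qreal (d i) else qzero) (N i j).

Definition strictly_upper n (N : 'I_n -> 'I_n -> quat) : Prop :=
  forall i j : 'I_n, (j <= i)%N -> N i j = qzero.

Definition graphN n (N : 'I_n -> 'I_n -> quat) : rel 'I_n :=
  fun i j => (N i j != qzero) || (N j i != qzero).

(* undirected graph is a tree: connected and without cycles
   (a cycle = closed walk through >= 3 distinct vertices; loops can't occur
   in the strictly upper triangular case, and would also be excluded below) *)
Definition is_tree n (e : rel 'I_n) : Prop :=
  (forall i j : 'I_n, connect e i j) /\
  (forall i : 'I_n, ~~ e i i) /\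
  ~ (exists p : seq 'I_n, [/\ uniq p, (2 < size p)%N & cycle e p]).

Definition pos_sphere n (beta : 'I_n -> R) : Prop :=
  \sum_(i < n) beta i ^+ 2 = 1 /\ forall i, 0 <= beta i.

Definition rvalue n (N : 'I_n -> 'I_n -> quat) (beta : 'I_n -> R) : R :=
  \sum_(i < n) \sum_(j < n | i != j) beta i * beta j * qnorm (N i j).
Definition is_r_max n (d : 'I_n -> R) (N : 'I_n -> 'I_n -> quat) (dd m : R) : Prop :=
  (exists beta, [/\ pos_sphere beta, \sum_(i < n) d i * beta i ^+ 2 = dd
                  & rvalue N beta = m]) /\
  (forall beta, pos_sphere beta -> \sum_(i < n) d i * beta i ^+ 2 = dd ->
                rvalue N beta <= m).

End Quat.

(* Main.v *)
Require Import Defs.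
From HB Require Import structures.
From mathcomp Require Import all_boot all_order all_algebra.
From mathcomp Require Import ring lra.
Set Implicit Arguments. Unset Strict Implicit. Unset Printing Implicit Defensive.
Import Order.TTheory GRing.Theory Num.Theory.
Local Open Scope ring_scope.

Section Q.
Variable R : rcfType.
Implicit Types p q : quat R.

Definition qc (k : nat) (p : quat R) : R :=
  match k with 0 => q0 p | 1 => q1 p | 2 => q2 p | _ => q3 p end.
Definition qscale (c : R) (p : quat R) : quat R :=
  Quat (c * q0 p) (c * q1 p) (c * q2 p) (c * q3 p).

Lemma qcP p q : (forall k, qc k p = qc k q) -> p = q.
Proof. by case: p; case: q => a b c d a' b' c' d' H;
  move: (H 0%N) (H 1%N) (H 2%N) (H 3%N) => /= -> -> -> ->. Qed.

Lemma qc_add k p q : qc k (qadd p q) = qc k p + qc k q.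
Proof. by case: k => [|[|[|k]]]. Qed.
Lemma qc_opp k p : qc k (qopp p) = - qc k p.
Proof. by case: k => [|[|[|k]]]. Qed.
Lemma qc_sub k p q : qc k (qsub p q) = qc k p - qc k q.
Proof. by rewrite /qsub qc_add qc_opp. Qed.
Lemma qc_zero k : qc k (qzero R) = 0.
Proof. by case: k => [|[|[|k]]]. Qed.
Lemma qc_real k r : qc k (qreal r) = (k == 0)%N%:R * r.
Proof. by case: k => [|[|[|k]]] /=; rewrite ?mul1r ?mul0r. Qed.
Lemma qc_scale k c p : qc k (qscale c p) = c * qc k p.
Proof. by case: k => [|[|[|k]]]. Qed.
Lemma qc_sum k n (F : 'I_n -> quat R) : qc k (qsum F) = \sum_(i < n) qc k (F i).
Proof. exact: (big_morph (qc k) (qc_add k) (qc_zero k)). Qed.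

Lemma qnorm2E p : qnorm2 p = q0 p ^+ 2 + q1 p ^+ 2 + q2 p ^+ 2 + q3 p ^+ 2.
Proof. rewrite /qnorm2 /=; ring. Qed.
Lemma qnorm2_ge0 p : 0 <= qnorm2 p.
Proof. by rewrite qnorm2E; rewrite !addr_ge0 ?sqr_ge0. Qed.
Lemma qnorm_ge0 p : 0 <= qnorm p.
Proof. exact: sqrtr_ge0. Qed.
Lemma qnorm_sqr p : qnorm p ^+ 2 = qnorm2 p.
Proof. by rewrite sqr_sqrtr ?qnorm2_ge0. Qed.
Lemma qnorm2_mul p q : qnorm2 (qmul p q) = qnorm2 p * qnorm2 q.
Proof. rewrite !qnorm2E /=; ring. Qed.
Lemma qnorm_mul p q : qnorm (qmul p q) = qnorm p * qnorm q.
Proof. by rewrite /qnorm qnorm2_mul sqrtrM ?qnorm2_ge0. Qed.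
Lemma qnorm2_conj p : qnorm2 (qconj p) = qnorm2 p.
Proof. rewrite !qnorm2E /=; ring. Qed.
Lemma qnorm_conj p : qnorm (qconj p) = qnorm p.
Proof. by rewrite /qnorm qnorm2_conj. Qed.
Lemma qnorm_zero : qnorm (qzero R) = 0.
Proof. by rewrite /qnorm qnorm2E /= expr0n /= !addr0 sqrtr0. Qed.

Lemma qnorm_add p q : qnorm (qadd p q) <= qnorm p + qnorm q.
Proof.
set a := qnorm2 p; set b := qnorm2 q.
set dt := q0 p * q0 q + q1 p * q1 q + q2 p * q2 q + q3 p * q3 q.
have E : qnorm2 (qadd p q) = a + b + 2 * dt by rewrite /a /b /dt !qnorm2E /=; ring.
have CS : dt ^+ 2 <= a * b.
  have -> : a * b = dt ^+ 2 + ((q0 p * q1 q - q1 p * q0 q) ^+ 2 + (q0 p * q2 q - q2 p * q0 q) ^+ 2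
     + (q0 p * q3 q - q3 p * q0 q) ^+ 2 + (q1 p * q2 q - q2 p * q1 q) ^+ 2
     + (q1 p * q3 q - q3 p * q1 q) ^+ 2 + (q2 p * q3 q - q3 p * q2 q) ^+ 2).
    by rewrite /a /b /dt !qnorm2E; ring.
  by rewrite lerDl !addr_ge0 ?sqr_ge0.
have sa := qnorm_ge0 p; have sb := qnorm_ge0 q.
have ha := qnorm_sqr p; have hb := qnorm_sqr q.
rewrite -/a in ha; rewrite -/b in hb.
have D : dt <= qnorm p * qnorm q.
  have h2 : dt ^+ 2 <= (qnorm p * qnorm q) ^+ 2 by rewrite exprMn ha hb.
  have h0 : 0 <= qnorm p * qnorm q by rewrite mulr_ge0.
  nra.
rewrite {1}/qnorm E -(@ger0_norm _ (qnorm p + qnorm q)) ?addr_ge0 //.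
rewrite -sqrtr_sqr ler_sqrt; last by rewrite sqr_ge0.
rewrite sqrrD ha hb; lra.
Qed.

Lemma qnorm_big (I : eqType) (r : seq I) (F : I -> quat R) :
  qnorm (\big[@qadd R/qzero R]_(i <- r) F i) <= \sum_(i <- r) qnorm (F i).
Proof.
elim: r => [|x r IH]; first by rewrite !big_nil qnorm_zero.
rewrite !big_cons; apply: le_trans (qnorm_add _ _) _; exact: lerD.
Qed.

End Q.


Section T.
Variable R : rcfType.
Implicit Types p q w a : quat R.

Ltac qring := apply: qcP => -[|[|[|k]]] /=; ring.

Lemma fwd_id w a s c :
  qmul (qmul (qconj w) a) (qscale c (qmul (qmul (qconj a) w) s))
  = qscale (c * qnorm2 a * qnorm2 w) s.
Proof. rewrite !qnorm2E; qring. Qed.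
Lemma bwd_id w a s c :
  qmul (qmul (qconj (qscale c (qmul (qmul a w) (qconj s)))) a) w
  = qscale (c * qnorm2 a * qnorm2 w) s.
Proof. rewrite !qnorm2E; qring. Qed.
Lemma zero_id w w' s : qmul (qmul (qconj w) (qzero R)) w' = qscale (qnorm (qzero R)) s.
Proof. by rewrite qnorm_zero; apply: qcP => -[|[|[|k]]] /=; rewrite !(mulr0, mul0r, oppr0, subr0, addr0). Qed.
Lemma qnorm2_scale c p : qnorm2 (qscale c p) = c ^+ 2 * qnorm2 p.
Proof. rewrite !qnorm2E /=; ring. Qed.

Definition okq (s : quat R) w1 w2 a := qmul (qmul (qconj w1) a) w2 = qscale (qnorm a) s.

Lemma qnorm_neq0 a : a != qzero R -> qnorm a != 0.
Proof.
move=> az.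
  apply: contra az => /eqP h0; have : qnorm2 a = 0 by rewrite -qnorm_sqr h0 expr0n.
  rewrite qnorm2E => h; apply/eqP; apply: qcP => k.
  have hh0 : q0 a = 0 /\ q1 a = 0 /\ q2 a = 0 /\ q3 a = 0.
    have := sqr_ge0 (q0 a); have := sqr_ge0 (q1 a); have := sqr_ge0 (q2 a);
    have := sqr_ge0 (q3 a) => g3 g2 g1 g0.
    have e0 : q0 a ^+ 2 = 0 by lra.
    have e1 : q1 a ^+ 2 = 0 by lra.
    have e2 : q2 a ^+ 2 = 0 by lra.
    have e3 : q3 a ^+ 2 = 0 by lra.
    have sq0 (x : R) : x ^+ 2 = 0 -> x = 0 by move/eqP; rewrite sqrf_eq0 => /eqP.
    by rewrite (sq0 _ e0) (sq0 _ e1) (sq0 _ e2) (sq0 _ e3).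
  by case: hh0 => [e0 [e1 [e2 e3]]]; case: k => [|[|[|k]]] /=.
Qed.
Lemma inv_norm_fact a : a != qzero R -> (qnorm a)^-1 * qnorm2 a = qnorm a.
Proof.
move=> az; have hp := qnorm_neq0 az.
by rewrite -qnorm_sqr expr2 mulrA mulVf // mul1r.
Qed.

Lemma fwd_ok s w a : qnorm2 w = 1 -> a != qzero R ->
  okq s w (qscale (qnorm a)^-1 (qmul (qmul (qconj a) w) s)) a.
Proof. by move=> hw az; rewrite /okq fwd_id hw mulr1 inv_norm_fact. Qed.
Lemma bwd_ok s w a : qnorm2 w = 1 -> a != qzero R ->
  okq s (qscale (qnorm a)^-1 (qmul (qmul a w) (qconj s))) w a.
Proof. by move=> hw az; rewrite /okq bwd_id hw mulr1 inv_norm_fact. Qed.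
Lemma fwd_unit s w a : qnorm2 w = 1 -> qnorm2 s = 1 -> a != qzero R ->
  qnorm2 (qscale (qnorm a)^-1 (qmul (qmul (qconj a) w) s)) = 1.
Proof.
move=> hw hs az; rewrite qnorm2_scale !qnorm2_mul qnorm2_conj hw hs !mulr1.
by rewrite expr2 -mulrA inv_norm_fact // mulVf // qnorm_neq0.
Qed.
End T.

Section T2.
Variable R : rcfType.
Lemma bwd_unit (s w a : quat R) : qnorm2 w = 1 -> qnorm2 s = 1 -> a != qzero R ->
  qnorm2 (qscale (qnorm a)^-1 (qmul (qmul a w) (qconj s))) = 1.
Proof.
move=> hw hs az; rewrite qnorm2_scale !qnorm2_mul qnorm2_conj hw hs !mulr1.
by rewrite expr2 -mulrA inv_norm_fact // mulVf // qnorm_neq0.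
Qed.
End T2.


Section Tree.
Variable R : rcfType.
Variable n : nat.
Variable N : 'I_n -> 'I_n -> quat R.
Hypothesis hN : strictly_upper N.
Hypothesis htree : is_tree (graphN N).
Variable s : quat R.
Hypothesis hs : qnorm2 s = 1.

Let e := graphN N.
Definition relS (S : {set 'I_n}) : rel 'I_n := fun a b => [&& a \in S, b \in S & e a b].

Lemma e_sym : symmetric e.
Proof. by move=> a b; rewrite /e /graphN orbC. Qed.

Lemma relS_sym (S : {set 'I_n}) : symmetric (relS S).
Proof. by move=> a b; rewrite /relS e_sym andbCA !andbA. Qed.

Lemma path_in (S : {set 'I_n}) x p : path (relS S) x p -> all (fun z => z \in S) p.
Proof.
elim: p x => //= y p IH x /andP[/and3P[_ yS _] /IH]; by rewrite yS.
Qed.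

Lemma cross (S : {set 'I_n}) a b : a \in S -> b \notin S -> connect e a b ->
  exists x y, [/\ x \in S, y \notin S & e x y].
Proof.
move=> aS bS /connectP[p pth Eb]; elim: p a aS pth Eb => /= [|y p IH] a aS.
  by move=> _ Eb; rewrite Eb aS in bS.
case/andP=> eay pth Eb; case: (boolP (y \in S)) => yS.
  exact: IH yS pth Eb.
by exists a, y.
Qed.

Lemma nonedge (j v : 'I_n) : ~~ e j v -> N v j = qzero R /\ N j v = qzero R.
Proof. by rewrite /e /graphN negb_or !negbK => /andP[/eqP-> /eqP->]. Qed.

Lemma no_cycle (S : {set 'I_n}) u j v : u \in S -> j \in S -> u != j -> v \notin S ->
  e u v -> e j v -> connect (relS S) u j -> False.
Proof.
move=> uS jS uj vS euv ejv /connectP[p pth Ej].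
have [_ [_ ncyc]] := htree.
move: uj ejv; rewrite Ej.
case: (shortenP pth) => p' pth' up' _ uj ejv.
apply: ncyc; exists [:: v, u & p']; split.
- rewrite cons_uniq up' andbT inE negb_or.
  apply/andP; split; first by apply/eqP => vu; rewrite vu uS in vS.
  apply/negP => vp; have := allP (path_in pth') v vp; by rewrite (negbTE vS).
- by case: p' {pth' up'} uj ejv => [|x p'] //=; rewrite eqxx.
- rewrite /cycle rcons_cons /= rcons_path.
  apply/and3P; split => //; first by rewrite -/e e_sym.
  by apply: sub_path pth' => a b /and3P[_ _].
Qed.

Definition Tn (u v : 'I_n) (w : 'I_n -> quat R) :=
  if (u < v)%N then qscale (qnorm (N u v))^-1 (qmul (qmul (qconj (N u v)) (w u)) s)
  else qscale (qnorm (N v u))^-1 (qmul (qmul (N v u) (w u)) (qconj s)).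

Lemma Nii (i : 'I_n) : N i i = qzero R.
Proof. exact: hN. Qed.

Lemma edge_lt (u v : 'I_n) : e u v -> (u < v)%N -> N u v != qzero R.
Proof.
move=> euv uv; move: euv; rewrite /e /graphN (hN (ltnW uv)) eqxx orbF //.
Qed.
Lemma edge_ge (u v : 'I_n) : e u v -> ~~ (u < v)%N -> N v u != qzero R.
Proof.
move=> euv; rewrite -leqNgt => vu; move: euv; rewrite /e /graphN (hN vu) eqxx //.
Qed.

Lemma qnorm2_one : qnorm2 (qreal (1 : R)) = 1.
Proof. by rewrite qnorm2E /= expr1n expr0n /= !addr0. Qed.

Lemma grow (r0 : 'I_n) k : (k < n)%N -> exists S : {set 'I_n},
  [/\ #|S| = k.+1, r0 \in S, (forall a, a \in S -> connect (relS S) r0 a) &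
   (exists w : 'I_n -> quat R, (forall i, qnorm2 (w i) = 1) /\
     (forall i j, i \in S -> j \in S -> okq s (w i) (w j) (N i j)))].
Proof.
elim: k => [|k IH] hk.
  exists [set r0]; split; first by rewrite cards1.
  - by rewrite set11.
  - by move=> a; rewrite in_set1 => /eqP->; apply: connect0.
  exists (fun _ => qreal 1); split => [i|i j]; first exact: qnorm2_one.
  by rewrite !in_set1 => /eqP-> /eqP->; rewrite Nii; apply: zero_id.
have [S [cS r0S conS [w [wu wok]]]] := IH (ltnW hk).
have [b _ bS] : exists2 b, b \in [set: 'I_n] & b \notin S.
  apply/subsetPn; apply/negP => sub; have := subset_leq_card sub.
  rewrite cardsT card_ord cS => H; have := leq_trans hk H; by rewrite ltnn.
have [u [v [uS vS euv]]] := cross r0S bS (htree.1 r0 b).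
have cuj : forall x y, x \in S -> y \in S -> connect (relS S) x y.
  move=> x y xS yS; apply: connect_trans (conS y yS).
  by rewrite (sym_connect_sym (@relS_sym S)); apply: conS.
have sub : subrel (relS S) (relS (v |: S)).
  by move=> a c /and3P[aS cS' eac]; rewrite /relS !in_setU1 aS cS' eac !orbT.
have csub : forall x y, connect (relS S) x y -> connect (relS (v |: S)) x y.
  by apply: connect_sub => x y /sub; apply: connect1.
exists (v |: S); split.
- by rewrite cardsU1 vS cS.
- by rewrite setU1r.
- move=> a; rewrite in_setU1 => /orP[/eqP-> | aS]; last exact/csub/conS.
  apply: connect_trans (csub _ _ (conS u uS)) (connect1 _).
  by rewrite /relS !in_setU1 eqxx uS orbT euv.
exists (fun i => if i == v then Tn u v w else w i); split.
  move=> i; case: eqP => _ //; rewrite /Tn; case: ifP => h.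
    by apply: fwd_unit => //; apply: edge_lt.
  by apply: bwd_unit => //; apply: edge_ge => //; rewrite h.
have noe : forall j, j \in S -> j != u -> N v j = qzero R /\ N j v = qzero R.
  move=> j jS ju; apply: nonedge; apply/negP => ejv.
  by apply: (no_cycle uS jS _ vS euv ejv (cuj _ _ uS jS)); rewrite eq_sym.
move=> i j; rewrite !in_setU1.
case: (eqVneq i v) => [->|iv]; case: (eqVneq j v) => [->|jv] //= Hi Hj.
- by rewrite Nii; apply: zero_id.
- case: (eqVneq j u) => [->|ju]; last by rewrite (noe j Hj ju).1; apply: zero_id.
  rewrite /Tn; case: ifP => h; first by rewrite (hN (ltnW h)); apply: zero_id.
  by apply: bwd_ok => //; apply: edge_ge => //; rewrite h.
- case: (eqVneq i u) => [->|iu]; last by rewrite (noe i Hi iu).2; apply: zero_id.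
  rewrite /Tn; case: ifP => h; first by apply: fwd_ok => //; apply: edge_lt.
  have h' : (v <= u)%N by rewrite leqNgt h.
  by rewrite (hN h'); apply: zero_id.
- exact: wok.
Qed.

Lemma exists_w : (0 < n)%N -> exists w : 'I_n -> quat R,
  (forall i, qnorm2 (w i) = 1) /\ (forall i j, okq s (w i) (w j) (N i j)).
Proof.
move=> n0; have hk : (n.-1 < n)%N by rewrite ltn_predL.
have [S [cS _ _ [w [wu wok]]]] := grow (Ordinal n0) hk.
have ST : S = setT.
  by apply/eqP; rewrite eqEcard subsetT cardsT card_ord cS prednK /=.
by exists w; split => // i j; apply: wok; rewrite ST inE.
Qed.
End Tree.


Section Main.
Variable R : rcfType.
Ltac qring2 := apply: qcP => -[|[|[|k]]] /=; ring.

Lemma dist_id (a b c w : quat R) :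
  qmul (qmul (qconj a) (qadd b c)) w = qadd (qmul (qmul (qconj a) b) w) (qmul (qmul (qconj a) c) w).
Proof. qring2. Qed.
Lemma diag_id (a : quat R) r : qmul (qmul (qconj a) (qreal r)) a = qreal (r * qnorm2 a).
Proof. rewrite qnorm2E; qring2. Qed.
Lemma zero_mul (a w : quat R) : qmul (qmul (qconj a) (qzero R)) w = qzero R.
Proof. by apply: qcP => -[|[|[|k]]] /=; rewrite !(mulr0, mul0r, oppr0, subr0, addr0). Qed.
Lemma conj_mul (a : quat R) : qmul (qconj a) a = qreal (qnorm2 a).
Proof. rewrite qnorm2E; qring2. Qed.
Lemma scale_mul (a b : R) (w1 M w2 : quat R) :
  qmul (qmul (qconj (qscale a w1)) M) (qscale b w2) = qscale (a * b) (qmul (qmul (qconj w1) M) w2).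
Proof. qring2. Qed.

Variable n : nat.
Variable d : 'I_n -> R.
Variable N : 'I_n -> 'I_n -> quat R.
Hypothesis hN : strictly_upper N.

Definition Mt (x : 'I_n -> quat R) i j := qmul (qmul (qconj (x i)) (N i j)) (x j).

Lemma qform_c k x : qc k (qform (diag_plus d N) x) =
  (k == 0)%N%:R * (\sum_i d i * qnorm2 (x i)) + \sum_i \sum_j qc k (Mt x i j).
Proof.
rewrite /qform qc_sum mulr_sumr -big_split; apply: eq_bigr => i _.
rewrite qc_sum /diag_plus.
under eq_bigr => j _ do rewrite dist_id qc_add.
rewrite big_split; congr (_ + _).
rewrite (bigD1 i) //= eqxx diag_id qc_real big1 ?addr0 // => j /negbTE.
by rewrite eq_sym => ->; rewrite zero_mul qc_zero.
Qed.

Lemma sum_diag (f : 'I_n -> 'I_n -> R) : (forall i, f i i = 0) ->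
  \sum_i \sum_j f i j = \sum_i \sum_(j | i != j) f i j.
Proof.
move=> f0; apply: eq_bigr => i _; rewrite (bigD1 i) //= f0 add0r.
by apply: eq_bigl => j; rewrite eq_sym.
Qed.

Lemma Nii' i : N i i = qzero R. Proof. exact: hN. Qed.

Lemma sub_dir (dlo dhi : R) (r : R -> R)
  (hlo : forall i, dlo <= d i) (hhi : forall i, d i <= dhi)
  (hr : forall dd, dlo <= dd <= dhi -> is_r_max d N dd (r dd)) q :
  numrange (diag_plus d N) q ->
  exists dd, dlo <= dd <= dhi /\ qdisk (qreal dd) (r dd) q.
Proof.
case=> x [xu ->]; set D := \sum_i d i * qnorm2 (x i).
set b := fun i => qnorm (x i).
have hb2 i : b i ^+ 2 = qnorm2 (x i) by rewrite /b qnorm_sqr.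
have s1 : \sum_i b i ^+ 2 = 1.
  have := congr1 (qc 0) xu; rewrite qc_sum qc_real mul1r => <-.
  by apply: eq_bigr => i _; rewrite hb2 conj_mul qc_real mul1r.
have ps : pos_sphere b by split=> // i; apply: qnorm_ge0.
have hD : \sum_i d i * b i ^+ 2 = D by apply: eq_bigr => i _; rewrite hb2.
have hDr : dlo <= D <= dhi.
  rewrite -hD; apply/andP; split.
    rewrite -[dlo]mulr1 -s1 mulr_sumr; apply: ler_sum => i _.
    by apply: ler_wpM2r; rewrite ?sqr_ge0.
  rewrite -[dhi]mulr1 -s1 mulr_sumr; apply: ler_sum => i _.
  by apply: ler_wpM2r; rewrite ?sqr_ge0.
exists D; split => //; rewrite /qdisk.
have [_ hmax] := hr D hDr.
apply: le_trans (hmax b ps hD).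
have -> : qsub (qform (diag_plus d N) x) (qreal D) = qsum (fun i => qsum (fun j => Mt x i j)).
  apply: qcP => k; rewrite qc_sub qform_c qc_real addrC addKr qc_sum.
  by apply: eq_bigr => i _; rewrite qc_sum.
apply: le_trans (qnorm_big _ _) _.
rewrite /rvalue -sum_diag => [|i]; last by rewrite Nii' qnorm_zero mulr0.
apply: ler_sum => i _; apply: le_trans (qnorm_big _ _) _.
apply: ler_sum => j _; rewrite /Mt !qnorm_mul qnorm_conj /b.
by rewrite mulrAC.
Qed.

Lemma qnorm2_eq0 (a : quat R) : qnorm2 a = 0 -> a = qzero R.
Proof.
move=> h; apply/eqP; apply/negPn/negP => /qnorm_neq0; by rewrite /qnorm h sqrtr0 eqxx.
Qed.

Lemma rvalue_ge0 (b : 'I_n -> R) : (forall i, 0 <= b i) -> 0 <= rvalue N b.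
Proof.
move=> hb; apply: sumr_ge0 => i _; apply: sumr_ge0 => j _.
by rewrite !mulr_ge0 ?qnorm_ge0.
Qed.

Lemma constructB (n_gt0 : (0 < n)%N) (htree : is_tree (graphN N)) (b : 'I_n -> R) q :
  pos_sphere b ->
  qnorm2 (qsub q (qreal (\sum_i d i * b i ^+ 2))) = rvalue N b ^+ 2 ->
  numrange (diag_plus d N) q.
Proof.
case=> s1 b0; set D := \sum_i _; set rho := rvalue N b => hq.
set del := qsub q (qreal D).
have rho0 : 0 <= rho := rvalue_ge0 b0.
pose s := if rho == 0 then qreal 1 else qscale rho^-1 del.
have hs : qnorm2 s = 1.
  rewrite /s; case: eqP => [_|/eqP nz]; first exact: qnorm2_one.
  by rewrite qnorm2_scale -/del hq exprVn mulVf // expf_neq0.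
have hdel : del = qscale rho s.
  rewrite /s; case: eqP => [z|/eqP nz].
    rewrite (qnorm2_eq0 (_ : qnorm2 del = 0)); last by rewrite /del hq z expr0n.
    by apply: qcP => -[|[|[|k]]] /=; rewrite z mul0r.
  by apply: qcP => k; rewrite !qc_scale mulrA mulfV // mul1r.
have [w [wu wok]] := exists_w hN htree hs n_gt0.
exists (fun i => qscale (b i) (w i)); split.
  apply: qcP => k; rewrite qc_sum qc_real.
  under eq_bigr do rewrite conj_mul qc_real qnorm2_scale wu mulr1.
  by rewrite -mulr_sumr s1.
have -> : q = qadd (qreal D) del by apply: qcP => k; rewrite qc_add qc_sub addrC subrK.
apply: qcP => k; rewrite qform_c qc_add qc_real hdel qc_scale.
congr (_ + _).
  by congr (_ * _); apply: eq_bigr => i _; rewrite qnorm2_scale wu mulr1.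
rewrite /rho /rvalue -sum_diag => [|i]; last by rewrite Nii' qnorm_zero mulr0.
rewrite mulr_suml; apply: eq_bigr => i _; rewrite mulr_suml; apply: eq_bigr => j _.
by rewrite /Mt scale_mul (wok i j) qc_scale qc_scale mulrA.
Qed.
End Main.


Section IVT.
Variable R : rcfType.
Variable n : nat.
Variable d : 'I_n -> R.
Variable N : 'I_n -> 'I_n -> quat R.
Variable k0 : 'I_n.
Variable b0 : 'I_n -> R.
Variable q : quat R.

Definition yv (t : R) i := b0 i + ((i == k0)%:R - b0 i) * t.
Definition nv t := \sum_i yv t i ^+ 2.
Definition Dv t := \sum_i d i * yv t i ^+ 2.
Definition Rv t := \sum_i \sum_(j | i != j) yv t i * yv t j * qnorm (N i j).
Definition v2 := q1 q ^+ 2 + q2 q ^+ 2 + q3 q ^+ 2.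
Definition gv t := Rv t ^+ 2 - (q0 q * nv t - Dv t) ^+ 2 - v2 * nv t ^+ 2.

Definition Yp i : {poly R} := (b0 i)%:P + ((i == k0)%:R - b0 i)%:P * 'X.
Definition Np := \sum_i Yp i ^+ 2.
Definition Dp := \sum_i (d i)%:P * Yp i ^+ 2.
Definition Rp := \sum_i \sum_(j | i != j) Yp i * Yp j * (qnorm (N i j))%:P.
Definition Gp := Rp ^+ 2 - ((q0 q)%:P * Np - Dp) ^+ 2 - v2%:P * Np ^+ 2.

Lemma Yp_eval t i : (Yp i).[t] = yv t i.
Proof. by rewrite /Yp !hornerE. Qed.

Lemma Gp_eval t : Gp.[t] = gv t.
Proof.
have hN : Np.[t] = nv t.
  by rewrite /Np horner_sum; apply: eq_bigr => i _; rewrite horner_exp Yp_eval.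
have hD : Dp.[t] = Dv t.
  by rewrite /Dp horner_sum; apply: eq_bigr => i _; rewrite hornerM hornerC horner_exp Yp_eval.
have hR : Rp.[t] = Rv t.
  rewrite /Rp horner_sum; apply: eq_bigr => i _; rewrite horner_sum.
  by apply: eq_bigr => j _; rewrite !hornerM hornerC !Yp_eval.
by rewrite /Gp !(hornerD, hornerN, horner_exp, hornerM, hornerC) hN hD hR.
Qed.
End IVT.

Section StepA.
Variable R : rcfType.
Variable n : nat.
Variable d : 'I_n -> R.
Variable N : 'I_n -> 'I_n -> quat R.
Variable k0 : 'I_n.

Lemma nq (q : quat R) D : qnorm2 (qsub q (qreal D)) = (q0 q - D) ^+ 2 + v2 q.
Proof. rewrite qnorm2E /v2 /=; ring. Qed.

Lemma stepA (b0 : 'I_n -> R) (q : quat R) : pos_sphere b0 ->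
  qnorm (qsub q (qreal (\sum_i d i * b0 i ^+ 2))) <= rvalue N b0 ->
  exists b, pos_sphere b /\
    qnorm2 (qsub q (qreal (\sum_i d i * b i ^+ 2))) = rvalue N b ^+ 2.
Proof.
case=> s1 bp hq.
have y0 i : yv k0 b0 0 i = b0 i by rewrite /yv mulr0 addr0.
have y1 i : yv k0 b0 1 i = (i == k0)%:R by rewrite /yv mulr1 addrC subrK.
have g0 : 0 <= gv d N k0 b0 q 0.
  have n0 : nv k0 b0 0 = 1 by rewrite /nv -s1; apply: eq_bigr => i _; rewrite y0.
  have D0 : Dv d k0 b0 0 = \sum_i d i * b0 i ^+ 2.
    by apply: eq_bigr => i _; rewrite y0.
  have R0 : Rv N k0 b0 0 = rvalue N b0.
    by apply: eq_bigr => i _; apply: eq_bigr => j _; rewrite !y0.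
  rewrite /gv n0 D0 R0 expr1n !mulr1.
  have := nq q (\sum_i d i * b0 i ^+ 2); rewrite -qnorm_sqr => e.
  have h0 := qnorm_ge0 (qsub q (qreal (\sum_i d i * b0 i ^+ 2))).
  move: e h0 hq; set qq := qnorm _; set rv := rvalue N b0 => e h0 hq.
  nra.
have g1 : gv d N k0 b0 q 1 <= 0.
  have R1 : Rv N k0 b0 1 = 0.
    apply: big1 => i _; apply: big1 => j ij; rewrite !y1.
    case: (eqVneq i k0) => [ik|ik]; last by rewrite mul0r mul0r.
    by rewrite -ik [j == i]eq_sym (negbTE ij) mulr0 mul0r.
  rewrite /gv R1 expr0n /= sub0r.
  have : 0 <= v2 q by rewrite /v2 !addr_ge0 ?sqr_ge0.
  have := sqr_ge0 (q0 q * nv k0 b0 1 - Dv d k0 b0 1); have := sqr_ge0 (nv k0 b0 1).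
  nra.
have [t /andP[t0 t1]] : exists2 t, 0 <= t <= 1 & root (- Gp d N k0 b0 q) t.
  apply: poly_ivt => //; rewrite !hornerN !Gp_eval oppr_le0 oppr_ge0 g0 g1 //.
move/rootP; rewrite hornerN Gp_eval => /eqP; rewrite oppr_eq0 => /eqP gt.
set y := yv k0 b0 t.
have yE i : y i = b0 i * (1 - t) + (i == k0)%:R * t by rewrite /y /yv; ring.
have y_ge0 i : 0 <= y i by rewrite yE addr_ge0 ?mulr_ge0 ?subr_ge0.
set nn := nv k0 b0 t.
have nn_gt0 : 0 < nn.
  case: (eqVneq t 0) => [tz|tnz].
    rewrite /nn /nv tz; under eq_bigr do rewrite y0; by rewrite s1.
  have tp : 0 < t by rewrite lt_def tnz t0.
  rewrite /nn /nv (bigD1 k0) //=; apply: (@lt_le_trans _ _ (y k0 ^+ 2)).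
    rewrite exprn_gt0 // yE eqxx mul1r.
    have : 0 <= b0 k0 * (1 - t) by rewrite mulr_ge0 ?subr_ge0.
    lra.
  by rewrite lerDl; apply: sumr_ge0 => i _; apply: sqr_ge0.
set c := Num.sqrt nn.
have c_gt0 : 0 < c by rewrite sqrtr_gt0.
have c2 : c ^+ 2 = nn by rewrite sqr_sqrtr // ltW.
have cnz : c != 0 by rewrite gt_eqF.
exists (fun i => y i / c); split.
  split; last by move=> i; rewrite divr_ge0 ?y_ge0 ?ltW.
  under eq_bigr do rewrite expr_div_n c2.
  by rewrite -mulr_suml divff // gt_eqF.
have -> : \sum_i d i * (y i / c) ^+ 2 = Dv d k0 b0 t / nn.
  rewrite /Dv mulr_suml; apply: eq_bigr => i _; rewrite expr_div_n c2 mulrA //.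
have -> : rvalue N (fun i => y i / c) = Rv N k0 b0 t / nn.
  rewrite /rvalue /Rv mulr_suml; apply: eq_bigr => i _; rewrite mulr_suml.
  apply: eq_bigr => j _; rewrite -c2 /y; field; exact: cnz.
rewrite nq.
move: gt; rewrite /gv -/nn => gt.
have nnz : nn != 0 by rewrite gt_eqF.
have : Rv N k0 b0 t ^+ 2 = (q0 q * nn - Dv d k0 b0 t) ^+ 2 + v2 q * nn ^+ 2.
  by move/eqP: gt; rewrite subr_eq0 subr_eq addrC => /eqP; rewrite addrC.
move=> E; rewrite expr_div_n E; field; exact: nnz.
Qed.
End StepA.

Unset Implicit Arguments.
Theorem theorem4p2 (R : rcfType) (n : nat) (n_gt0 : (0 < n)%N)
  (d : 'I_n -> R) (N : 'I_n -> 'I_n -> quat R)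
  (hN : strictly_upper N) (htree : is_tree (graphN N))
  (dlo dhi : R)
  (hlo : (exists i, d i = dlo) /\ forall i, dlo <= d i)
  (hhi : (exists i, d i = dhi) /\ forall i, d i <= dhi)
  (r : R -> R)
  (hr : forall dd, dlo <= dd <= dhi -> is_r_max d N dd (r dd)) :
  forall q : quat R,
    numrange (diag_plus d N) q <->
    exists dd, dlo <= dd <= dhi /\ qdisk (qreal dd) (r dd) q.
Proof.
move=> q; split.
  exact: (sub_dir hN hlo.2 hhi.2 hr).
case=> dd [hdd hdisk]; have [[b0 [ps hsum hrv]] _] := hr dd hdd.
rewrite /qdisk -hrv -hsum in hdisk.
have [b [psb eqb]] := stepA (Ordinal n_gt0) ps hdisk.
exact: (constructB hN n_gt0 htree psb eqb).
Qed.
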